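(* Let $ABCD$ be a (nondegenerate) rectangle and let $E,F,P,Q$ be points in the same plane. Assume that $h_{BC}(EF)>|AB|$ and $h_{AB}(PQ)>|BC|$. Then $$\mu(ABCDEFPQ)\geq \tfrac{1}{2}\bigl(h_{BC}(EF)-|AB|\bigr)|BC|+\tfrac{1}{2}\bigl(h_{AB}(PQ)-|BC|\bigr)|AB|+|AB||BC|.$$
   Context: For points $K_1,\dots,K_n$ in the plane, $\mu(K_1K_2\cdots K_n)$ denotes the area of the convex hull of $\{K_1,\dots,K_n\}$. For points $A,B$ and distinct points $D,C$, the height $h_{DC}(AB)$ is the distance between the two lines parallel to $DC$ passing through $A$ and through $B$ (i.e. the length of the perpendicular from one of $A,B$ to the parallel of $DC$ through the other). $|XY|$ denotes the length of segment $XY$. *)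

(* Defs.v *)
(* Points of the plane are pairs (x, y) : R * R
   for an arbitrary R : realType; area = 2-dimensional Lebesgue measure
   (product of Lebesgue measures on R). *)
From mathcomp Require Import all_boot all_order all_algebra.
From mathcomp Require Import all_classical all_reals all_analysis.
Set Implicit Arguments. Unset Strict Implicit. Unset Printing Implicit Defensive.
Import Order.TTheory GRing.Theory Num.Theory.
Local Open Scope classical_set_scope.
Local Open Scope ring_scope.

Definition pt (R : realType) := (R * R)%type.

Definition convex_hull (R : realType) (n : nat) (K : 'I_n -> pt R) : set (pt R) :=
  [set p | exists w : 'I_n -> R,
     (forall i, 0 <= w i) /\ \sum_(i < n) w i = 1 /\
     p = (\sum_(i < n) w i * (K i).1, \sum_(i < n) w i * (K i).2)].

Definition mu (R : realType) (n : nat) (K : 'I_n -> pt R) : \bar R :=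
  ((@lebesgue_measure R \x @lebesgue_measure R) (convex_hull K))%E.

Definition dist (R : realType) (X Y : pt R) : R :=
  Num.sqrt ((X.1 - Y.1) ^+ 2 + (X.2 - Y.2) ^+ 2).

(* h_{DC}(AB): distance between the lines parallel to DC through A and through B,
   i.e. the length of the component of B - A orthogonal to C - D. *)
Definition height (R : realType) (D C A B : pt R) : R :=
  `| (C.1 - D.1) * (B.2 - A.2) - (C.2 - D.2) * (B.1 - A.1) | / dist D C.

Definition rectangle (R : realType) (A B C D : pt R) : Prop :=
  A <> B /\ B <> C /\
  (B.1 - A.1) * (C.1 - B.1) + (B.2 - A.2) * (C.2 - B.2) = 0 /\
  D = (A.1 + (C.1 - B.1), A.2 + (C.2 - B.2)).

Definition pts8 (R : realType) (A B C D E F P Q : pt R) : 'I_8 -> pt R :=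
  fun i => nth A [:: A; B; C; D; E; F; P; Q] i.

(* Main.v *)
Require Import Defs.
From mathcomp Require Import all_boot all_order all_algebra.
From mathcomp Require Import all_classical all_reals all_analysis.
From mathcomp Require Import ring lra measurable_realfun.
Import Order.TTheory GRing.Theory Num.Theory.
Import numFieldNormedType.Exports.
Local Open Scope ring_scope.

Module Aux.
Set Implicit Arguments. Unset Strict Implicit. Unset Printing Implicit Defensive.
Local Open Scope classical_set_scope.
Local Open Scope ring_scope.
Section S.
Variable R : realType.
Notation lam := (@lebesgue_measure R).
Lemma mhalf (al be ga : R) : measurable [set P : R * R | 0 < al * P.1 + be * P.2 + ga].
Proof.
have mh : measurable_fun setT (fun P : R * R => al * P.1 + be * P.2 + ga).
  apply: measurable_funD; last exact: measurable_cst.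
  apply: measurable_funD; apply: measurable_funM; try exact: measurable_cst.
  exact: measurable_fst. exact: measurable_snd.
have := mh measurableT `]0, +oo[%classic (measurable_itv _).
rewrite setTI; congr measurable; apply/seteqP; split => P /=; rewrite in_itv /= andbT //.
Qed.
Definition vp (a b fa fs ga gs : R) : set (R * R) :=
 [set P | a < P.1 /\ P.1 < b /\ fa + fs*(P.1 - a) < P.2 /\ P.2 < ga + gs*(P.1 - a)].

Lemma xsec_vp a b fa fs ga gs x :
  xsection (vp a b fa fs ga gs) x =
  if (a < x) && (x < b) then `](fa + fs*(x - a)), (ga + gs*(x-a))[%classic else set0.
Proof.
apply/seteqP; split => y; rewrite /xsection /= inE /vp /=.
  move=> [h1 [h2 [h3 h4]]]; rewrite h1 h2 /=.
  by rewrite in_itv /= h3 h4.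
case: ifP => [/andP[h1 h2]|//] /=; rewrite in_itv /= => /andP[h3 h4]; by [].
Qed.

Lemma lam_vp a b fa fs ga gs x : fa <= ga -> fa + fs*(b-a) <= ga + gs*(b-a) ->
  lam (xsection (vp a b fa fs ga gs) x) =
  ((fun x => (ga + gs*(x-a) - (fa + fs*(x-a)))%:E) \_ `]a, b[%classic) x.
Proof.
move=> h0 h1; rewrite xsec_vp patchE.
case: ifP => [/andP[xa xb]|H].
  rewrite mem_set; last by rewrite /= in_itv /= xa xb.
  rewrite lebesgue_measure_itv /= lte_fin; case: ifP => // H.
  have : (b - a) * (ga + gs * (x - a) - (fa + fs * (x - a))) = 
    (ga - fa) * (b - x) + (ga + gs*(b-a) - (fa + fs*(b-a))) * (x - a) by ring.
  move=> E; apply/eqP; rewrite eq_sym; apply/eqP; congr (_%:E).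
  have : 0 <= (ga - fa) * (b - x) + (ga + gs*(b-a) - (fa + fs*(b-a))) * (x - a).
    apply: addr_ge0; apply: mulr_ge0; lra.
  rewrite -E => H2. 
  have hba : 0 < b - a by lra.
  have : 0 <= ga + gs * (x - a) - (fa + fs * (x - a)).
    by rewrite -(pmulr_rge0 _ hba).
  move: H => /negbT; rewrite -leNgt => H3 H4; lra.
rewrite memNset; first by rewrite measure0.
by rewrite /= in_itv /= H.
Qed.
End S.
Section T.
Variable R : realType.
Notation lam := (@lebesgue_measure R).
Lemma mu_vp a b fa fs ga gs : a <= b -> fa <= ga -> fa + fs*(b-a) <= ga + gs*(b-a) ->
  ((lam \x lam) (vp a b fa fs ga gs) = ((b-a)*(ga-fa) + (gs-fs)*(b-a)^+2/2)%:E)%E.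
Proof.
move=> hab h0 h1; rewrite /product_measure1 /=.
have Hc : continuous (fun x : R => ga + gs * (x - a) - (fa + fs * (x - a))).
  have -> : (fun x : R => ga + gs * (x - a) - (fa + fs * (x - a))) =
     horner ((ga - fa - (gs - fs) * a)%:P + (gs - fs) *: 'X).
    by apply/funext => x; rewrite !(hornerD, hornerZ, hornerX, hornerC); ring.
  exact/continuous_horner.
have Hm : forall D, measurable_fun D (fun x : R => (ga + gs * (x - a) - (fa + fs * (x - a)))%:E).
  move=> D; apply/measurable_EFinP; apply: measurable_funTS.
  exact: continuous_measurable_fun.
under eq_integral do rewrite lam_vp//.
rewrite -integral_mkcond.
move: hab; rewrite le_eqVlt => /orP[/eqP ab|ab].
  rewrite ab set_itvoo0 ?lexx // integral_set0; congr (_%:E); rewrite subrr; ring.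
rewrite integral_itv_obnd_cbnd; last exact: Hm.
rewrite integral_itv_bndo_bndc; last exact: Hm.
pose m := gs - fs; pose k := ga - fa - m * a.
pose q : {poly R} := k *: 'X + (m / 2) *: 'X^2.
rewrite (@continuous_FTC2 _ _ (horner q)) //.
{ rewrite -EFinB; congr (_%:E); rewrite !(hornerD, hornerZ, hornerX, hornerXn, hornerC) /k /m; by field. }
{ suff H : continuous (fun x : R => ga + gs * (x - a) - (fa + fs * (x - a))).
    by apply: continuous_subspaceT => x; exact: H.
  have -> : (fun x : R => ga + gs * (x - a) - (fa + fs * (x - a))) = horner (k%:P + m *: 'X).
    by apply/funext => x; rewrite !(hornerD, hornerZ, hornerX, hornerC) /k /m; ring.
  exact/continuous_horner. }
{ split; first by move=> x _; exact: derivable_horner.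
  exact/cvg_at_right_filter/continuous_horner.
  exact/cvg_at_left_filter/continuous_horner. }
move=> x _; rewrite -derivE /q derivD !derivZ derivX derivXn !(hornerD, hornerZ, hornerX, hornerXn, hornerC, hornerMn) /k /m /=.
rewrite expr1; by field.
Qed.
Lemma mvp (a b fa fs ga gs : R) : measurable (vp a b fa fs ga gs).
Proof.
have -> : vp a b fa fs ga gs =
  [set P : R * R | 0 < 1 * P.1 + 0 * P.2 + (- a)] `&`
  [set P : R * R | 0 < (-1) * P.1 + 0 * P.2 + b] `&`
  [set P : R * R | 0 < (- fs) * P.1 + 1 * P.2 + (fs * a - fa)] `&`
  [set P : R * R | 0 < gs * P.1 + (-1) * P.2 + (ga - gs * a)].
  apply/seteqP; split => P /=.
    move=> [h1 [h2 [h3 h4]]]; do !split; lra.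
  move=> [[[h1 h2] h3] h4]; do !split; lra.
by do !apply: measurableI; apply: mhalf.
Qed.

Definition cross (p q r : R * R) : R := (q.1 - p.1)*(r.2 - p.2) - (q.2 - p.2)*(r.1 - p.1).
Definition otri (p q r : R * R) : set (R * R) :=
  [set P | exists a b c : R, 0 < a /\ 0 < b /\ 0 < c /\ a + b + c = 1 /\
     P = (a * p.1 + b * q.1 + c * r.1, a * p.2 + b * q.2 + c * r.2)].

Lemma otri_cross p q r P : cross p q r != 0 -> 0 < cross P q r / cross p q r ->
  0 < cross p P r / cross p q r -> 0 < cross p q P / cross p q r -> otri p q r P.
Proof.
move=> c0 h1 h2 h3.
exists (cross P q r / cross p q r), (cross p P r / cross p q r), (cross p q P / cross p q r).
do !split => //.
  move: c0; case: p q r P {h1 h2 h3} => [x1 y1] [x2 y2] [x3 y3] [X Y]; rewrite /cross /= => c0.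
  by field.
move: c0; case: p q r P {h1 h2 h3} => [x1 y1] [x2 y2] [x3 y3] [X Y]; rewrite /cross /= => c0.
congr pair; by field.
Qed.

Lemma ndiv_gt0 (a c : R) : c < 0 -> a < 0 -> 0 < a / c.
Proof. move=> hc ha; have : c^-1 < 0 by rewrite invr_lt0. nra. Qed.
Lemma pdiv_gt0 (a c : R) : 0 < c -> 0 < a -> 0 < a / c.
Proof. move=> hc ha; have : 0 < c^-1 by rewrite invr_gt0. nra. Qed.

Lemma wl1 (c cp cq cr X x1 x2 x3 : R) : c < 0 -> cq < 0 -> cr < 0 -> x1 < X -> X < x2 -> x2 <= x3 ->
  cp + cq + cr = c -> c * (X - x1) = cq * (x2 - x1) + cr * (x3 - x1) -> cp < 0.
Proof.
move=> hc hq hr h1 h2 h3 e1 e2.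
have : cr * (x3 - x1) <= cr * (x2 - x1) by nra.
have : c * (x2 - x1) < c * (X - x1) by nra.
nra.
Qed.
Lemma wl2 (c cp cq cr X x1 x2 x3 : R) : 0 < c -> 0 < cq -> 0 < cr -> x1 < X -> X < x2 -> x2 <= x3 ->
  cp + cq + cr = c -> c * (X - x1) = cq * (x2 - x1) + cr * (x3 - x1) -> 0 < cp.
Proof.
move=> hc hq hr h1 h2 h3 e1 e2.
have : cr * (x2 - x1) <= cr * (x3 - x1) by nra.
have : c * (X - x1) < c * (x2 - x1) by nra.
nra.
Qed.
Lemma wl3 (c cp cq cr X x1 x2 x3 : R) : c < 0 -> cp < 0 -> cq < 0 -> x2 < X -> X < x3 -> x1 <= x2 ->
  cp + cq + cr = c -> c * (x3 - X) = cp * (x3 - x1) + cq * (x3 - x2) -> cr < 0.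
Proof.
move=> hc hq hr h1 h2 h3 e1 e2.
have : cp * (x3 - x1) <= cp * (x3 - x2) by nra.
have : c * (x3 - x2) < c * (x3 - X) by nra.
nra.
Qed.
Lemma wl4 (c cp cq cr X x1 x2 x3 : R) : 0 < c -> 0 < cp -> 0 < cq -> x2 < X -> X < x3 -> x1 <= x2 ->
  cp + cq + cr = c -> c * (x3 - X) = cp * (x3 - x1) + cq * (x3 - x2) -> 0 < cr.
Proof.
move=> hc hq hr h1 h2 h3 e1 e2.
have : cp * (x3 - x2) <= cp * (x3 - x1) by nra.
have : c * (x3 - X) < c * (x3 - x2) by nra.
nra.
Qed.


Notation mu2 := ((@lebesgue_measure R) \x (@lebesgue_measure R))%E.

Lemma tri_sorted x1 y1 x2 y2 x3 y3 : x1 <= x2 -> x2 <= x3 ->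
  exists S : set (R * R), measurable S /\ S `<=` otri (x1, y1) (x2, y2) (x3, y3) /\
   (cross (x1, y1) (x2, y2) (x3, y3) = 0 -> S = set0) /\
   ((`|cross (x1, y1) (x2, y2) (x3, y3)| / 2)%:E <= mu2 S)%E.
Proof.
move=> h12 h23.
have [c0|cn0] := eqVneq (cross (x1, y1) (x2, y2) (x3, y3)) 0.
  exists set0; split; first exact: measurable0.
  split; first by [].
  split; first by [].
  by rewrite c0 normr0 mul0r measure0.
have d0 : x1 < x3.
  rewrite lt_neqAle (le_trans h12 h23) andbT; apply/negP => /eqP e.
  move: cn0; rewrite /cross /= -e.
  have -> : x2 = x1 by apply/eqP; rewrite eq_le h12 /= e h23.
  by rewrite !subrr !mul0r mulr0 subrr eqxx.
set c := cross (x1, y1) (x2, y2) (x3, y3) in cn0 *.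
pose sl := (y3 - y1) / (x3 - x1).
pose m := y1 + sl * (x2 - x1).
pose s12 := (y2 - y1) / (x2 - x1).
pose s23 := (y3 - y2) / (x3 - x2).
have esl : (x3 - x1) * sl = y3 - y1.
  rewrite /sl; field; rewrite subr_eq0; apply/eqP => e; move: d0; rewrite e ltxx //.
have hc : c = - (x3 - x1) * (y2 - m).
  rewrite /c /cross /m /=.
  transitivity (-( (x3 - x1) * (y2 - y1) - (x2 - x1) * ((x3 - x1) * sl))); last by ring.
  rewrite esl; ring.
have e12 : x2 = x1 \/ (x2 - x1) * s12 = y2 - y1.
  have [e|ne] := eqVneq x2 x1; [by left|right].
  rewrite /s12; field; by rewrite subr_eq0.
have e23 : x3 = x2 \/ (x3 - x2) * s23 = y3 - y2.
  have [e|ne] := eqVneq x3 x2; [by left|right].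
  rewrite /s23; field; by rewrite subr_eq0.
have id1 X Y : cross (X, Y) (x2, y2) (x3, y3) + cross (x1, y1) (X, Y) (x3, y3)
   + cross (x1, y1) (x2, y2) (X, Y) = c by rewrite /c /cross /=; ring.
have id2 X Y : c * (X - x1) = cross (x1, y1) (X, Y) (x3, y3) * (x2 - x1) +
   cross (x1, y1) (x2, y2) (X, Y) * (x3 - x1) by rewrite /c /cross /=; ring.
have id3 X Y : c * (x3 - X) = cross (X, Y) (x2, y2) (x3, y3) * (x3 - x1) +
   cross (x1, y1) (X, Y) (x3, y3) * (x3 - x2) by rewrite /c /cross /=; ring.
have [gpos|gneg|geq] := ltgtP m y2; last first.
  by move: cn0; rewrite hc geq subrr mulr0 eqxx.
- have cpos : 0 < c by rewrite hc; nra.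
  exists (vp x1 x2 y1 s12 y1 sl `|` vp x2 x3 y2 s23 m sl).
  split; first exact: measurableU (mvp _ _ _ _ _ _) (mvp _ _ _ _ _ _).
  split.
    move=> [X Y] [[hX1 [hX2 [hY1 hY2]]] | [hX1 [hX2 [hY1 hY2]]]];
      move: hX1 hX2 hY1 hY2 => /= hX1 hX2 hY1 hY2; apply: otri_cross => //;
      rewrite -/c; apply: pdiv_gt0 => //.
    + have e : (x2 - x1) * s12 = y2 - y1 by case: e12 => // e; move: hX1 hX2; rewrite e; lra.
      apply: (wl2 cpos _ _ hX1 hX2 h23 (id1 X Y) (id2 X Y)).
        rewrite /cross /=.
        have -> : y3 = y1 + (x3 - x1) * sl by lra.
        have k1 : 0 < x3 - x1 by lra.
        have k2 : 0 < (y1 + sl*(X-x1)) - Y by lra.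
        have := mulr_gt0 k1 k2; nra.
      rewrite /cross /=.
      have -> : y2 = y1 + (x2 - x1) * s12 by lra.
      have k1 : 0 < x2 - x1 by lra.
      have k2 : 0 < Y - (y1 + s12*(X-x1)) by lra.
      have := mulr_gt0 k1 k2; nra.
    + rewrite /cross /=.
      have -> : y3 = y1 + (x3 - x1) * sl by lra.
      have k1 : 0 < x3 - x1 by lra.
      have k2 : 0 < (y1 + sl*(X-x1)) - Y by lra.
      have := mulr_gt0 k1 k2; nra.
    + have e : (x2 - x1) * s12 = y2 - y1 by case: e12 => // e; move: hX1 hX2; rewrite e; lra.
      rewrite /cross /=.
      have -> : y2 = y1 + (x2 - x1) * s12 by lra.
      have k1 : 0 < x2 - x1 by lra.
      have k2 : 0 < Y - (y1 + s12*(X-x1)) by lra.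
      have := mulr_gt0 k1 k2; nra.
    + have e : (x3 - x2) * s23 = y3 - y2 by case: e23 => // e; move: hX1 hX2; rewrite e; lra.
      rewrite /cross /=.
      have -> : y3 = y2 + (x3 - x2) * s23 by lra.
      have k1 : 0 < x3 - x2 by lra.
      have k2 : 0 < Y - (y2 + s23*(X-x2)) by lra.
      have := mulr_gt0 k1 k2; nra.
    + rewrite /cross /=.
      have -> : y3 = y1 + (x3 - x1) * sl by lra.
      have k1 : 0 < x3 - x1 by lra.
      have k2 : 0 < (y1 + sl*(X-x1)) - Y by rewrite /m in hY2; lra.
      have := mulr_gt0 k1 k2; nra.
    + have e : (x3 - x2) * s23 = y3 - y2 by case: e23 => // e; move: hX1 hX2; rewrite e; lra.
      have h12' : x1 <= x2 by [].
      apply: (wl4 cpos _ _ hX1 hX2 h12' (id1 X Y) (id3 X Y)).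
        rewrite /cross /=.
        have -> : y3 = y2 + (x3 - x2) * s23 by lra.
        have k1 : 0 < x3 - x2 by lra.
        have k2 : 0 < Y - (y2 + s23*(X-x2)) by lra.
        have := mulr_gt0 k1 k2; nra.
      rewrite /cross /=.
      have -> : y3 = y1 + (x3 - x1) * sl by lra.
      have k1 : 0 < x3 - x1 by lra.
      have k2 : 0 < (y1 + sl*(X-x1)) - Y by rewrite /m in hY2; lra.
      have := mulr_gt0 k1 k2; nra.
  split; first by move=> /eqP; rewrite (negbTE cn0).
  rewrite measureU; first last.
  - apply/seteqP; split => [[X Y] [[_ [h1 _]] [h2 _]]|//] /=; lra.
  - exact: mvp.
  - exact: mvp.
  have E1 : (sl - s12) * (x2 - x1) ^+ 2 = (x2 - x1) * (m - y2).
    case: e12 => [e|e]; first by rewrite e !subrr expr0n /= mulr0 mul0r.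
    rewrite /m; transitivity ((x2 - x1) * (sl * (x2 - x1) - (x2 - x1) * s12)); first by ring.
    rewrite e; ring.
  have E2 : (sl - s23) * (x3 - x2) ^+ 2 = - ((x3 - x2) * (m - y2)).
    case: e23 => [e|e]; first by rewrite e !subrr expr0n /= mulr0 mul0r oppr0.
    transitivity ((x3 - x2) * (sl * (x3 - x2) - (x3 - x2) * s23)); first by ring.
    rewrite e /m.
    have -> : y3 = y1 + (x3 - x1) * sl by lra.
    ring.
  rewrite /= !mu_vp //; first last.
  { case: e12 => [e|e]; first by rewrite e subrr !mulr0.
    have -> : s12 * (x2 - x1) = y2 - y1 by rewrite mulrC.
    rewrite /m in gneg; lra. }
  { case: e23 => [e|e]; first by rewrite e subrr !mulr0 !addr0 ltW.
    have -> : m + sl * (x3 - x2) = y3 by rewrite /m; lra.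
    lra. }
  { exact: ltW. }
  rewrite -EFinD lee_fin (gtr0_norm cpos) E1 E2 hc le_eqVlt; apply/orP; left; apply/eqP.
  by field.
- have cneg : c < 0 by rewrite hc; nra.
  exists (vp x1 x2 y1 sl y1 s12 `|` vp x2 x3 m sl y2 s23).
  split; first exact: measurableU (mvp _ _ _ _ _ _) (mvp _ _ _ _ _ _).
  split.
    move=> [X Y] [[hX1 [hX2 [hY1 hY2]]] | [hX1 [hX2 [hY1 hY2]]]];
      move: hX1 hX2 hY1 hY2 => /= hX1 hX2 hY1 hY2; apply: otri_cross => //; rewrite -/c; apply: ndiv_gt0 => //.
    + have e : (x2 - x1) * s12 = y2 - y1 by case: e12 => // e; move: hX1 hX2; rewrite e; lra.
      apply: (wl1 cneg _ _ hX1 hX2 h23 (id1 X Y) (id2 X Y)).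
        rewrite /cross /= -esl.
        have k1 : 0 < x3 - x1 by lra.
        have k2 : 0 < Y - (y1 + sl*(X-x1)) by lra.
        have := mulr_gt0 k1 k2; nra.
      rewrite /cross /= -e; nra.
    + rewrite /cross /= -esl; nra.
    + have e : (x2 - x1) * s12 = y2 - y1 by case: e12 => // e; move: hX1 hX2; rewrite e; lra.
      rewrite /cross /= -e; nra.
    + have e : (x3 - x2) * s23 = y3 - y2 by case: e23 => // e; move: hX1 hX2; rewrite e; lra.
      rewrite /cross /=.
      have -> : y3 = y2 + (x3 - x2) * s23 by lra.
      have k1 : 0 < x3 - x2 by lra.
      have k2 : 0 < (y2 + s23*(X-x2)) - Y by lra.
      have := mulr_gt0 k1 k2; nra.
    + rewrite /cross /=.
      have -> : y3 = y1 + (x3 - x1) * sl by lra.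
      have k1 : 0 < x3 - x1 by lra.
      have k2 : 0 < Y - (y1 + sl*(X-x1)) by rewrite /m in hY1; lra.
      have := mulr_gt0 k1 k2; nra.
    + have e : (x3 - x2) * s23 = y3 - y2 by case: e23 => // e; move: hX1 hX2; rewrite e; lra.
      have h12' : x1 <= x2 by [].
      apply: (wl3 cneg _ _ hX1 hX2 h12' (id1 X Y) (id3 X Y)).
        rewrite /cross /=.
        have -> : y3 = y2 + (x3 - x2) * s23 by lra.
        have k1 : 0 < x3 - x2 by lra.
        have k2 : 0 < (y2 + s23*(X-x2)) - Y by lra.
        have := mulr_gt0 k1 k2; nra.
      rewrite /cross /=.
      have -> : y3 = y1 + (x3 - x1) * sl by lra.
      have k1 : 0 < x3 - x1 by lra.
      have k2 : 0 < Y - (y1 + sl*(X-x1)) by rewrite /m in hY1; lra.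
      have := mulr_gt0 k1 k2; nra.
  split; first by move=> /eqP; rewrite (negbTE cn0).
  rewrite measureU; first last.
  - apply/seteqP; split => [[X Y] [[_ [h1 _]] [h2 _]]|//] /=; lra.
  - exact: mvp.
  - exact: mvp.
  have E1 : (s12 - sl) * (x2 - x1) ^+ 2 = (x2 - x1) * (y2 - m).
    case: e12 => [e|e]; first by rewrite e !subrr expr0n /= mulr0 mul0r.
    rewrite /m; transitivity ((x2 - x1) * ((x2 - x1) * s12 - sl * (x2 - x1))); first by ring.
    rewrite e; ring.
  have E2 : (s23 - sl) * (x3 - x2) ^+ 2 = - ((x3 - x2) * (y2 - m)).
    case: e23 => [e|e]; first by rewrite e !subrr expr0n /= mulr0 mul0r oppr0.
    transitivity ((x3 - x2) * ((x3 - x2) * s23 - sl * (x3 - x2))); first by ring.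
    rewrite e /m.
    have -> : y3 = y1 + (x3 - x1) * sl by lra.
    ring.
  rewrite /= !mu_vp //; first last.
  { case: e12 => [e|e]; first by rewrite e subrr !mulr0.
    have -> : s12 * (x2 - x1) = y2 - y1 by rewrite mulrC.
    rewrite /m in gpos; lra. }
  { case: e23 => [e|e]; first by rewrite e subrr !mulr0 !addr0 ltW.
    have -> : m + sl * (x3 - x2) = y3 by rewrite /m; lra.
    lra. }
  { exact: ltW. }
  rewrite -EFinD lee_fin (ltr0_norm cneg) E1 E2 hc le_eqVlt; apply/orP; left; apply/eqP.
  by field.
Qed.
End T.
Section F.
Variable R : realType.
Notation mu2 := ((@lebesgue_measure R) \x (@lebesgue_measure R))%E.

Definition TP (p q r : R * R) := exists S : set (R * R), measurable S /\ S `<=` otri p q r /\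
   (cross p q r = 0 -> S = set0) /\ ((`|cross p q r| / 2)%:E <= mu2 S)%E.

Lemma otri12 (p q r : R * R) : otri p q r = otri q p r.
Proof.
by apply/seteqP; split => X [a [b [c [ha [hb [hc [h1 ->]]]]]]];
  exists b, a, c; do !split => //; [lra| congr pair; ring | lra | congr pair; ring].
Qed.
Lemma otri23 (p q r : R * R) : otri p q r = otri p r q.
Proof.
by apply/seteqP; split => X [a [b [c [ha [hb [hc [h1 ->]]]]]]];
  exists a, c, b; do !split => //; [lra| congr pair; ring | lra | congr pair; ring].
Qed.
Lemma TP12 p q r : TP p q r -> TP q p r.
Proof.
have e : cross q p r = - cross p q r by rewrite /cross; ring.
move=> [S [h1 [h2 [h3 h4]]]]; exists S; rewrite -otri12 e normrN; do !split => //.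
by move=> /eqP; rewrite oppr_eq0 => /eqP.
Qed.
Lemma TP23 p q r : TP p q r -> TP p r q.
Proof.
have e : cross p r q = - cross p q r by rewrite /cross; ring.
move=> [S [h1 [h2 [h3 h4]]]]; exists S; rewrite -otri23 e normrN; do !split => //.
by move=> /eqP; rewrite oppr_eq0 => /eqP.
Qed.
Lemma TPs (p q r : R * R) : p.1 <= q.1 -> q.1 <= r.1 -> TP p q r.
Proof. case: p q r => [x1 y1] [x2 y2] [x3 y3] /=; exact: tri_sorted. Qed.
Lemma TPall p q r : TP p q r.
Proof.
have [h1|h1] := leP p.1 q.1; have [h2|h2] := leP q.1 r.1; have [h3|h3] := leP p.1 r.1.
- exact: TPs.
- exact: TPs.
- apply: TP23; apply: TPs => //; exact: ltW.
- apply: TP12; apply: TP23; apply: TP12; apply: TP23; apply: TPs => //; exact: ltW.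
- apply: TP12; apply: TPs => //; exact: ltW.
- apply: TP12; apply: TP23; apply: TPs => //; exact: ltW.
- lra.
- apply: TP23; apply: TP12; apply: TP23; apply: TPs => //; exact: ltW.
Qed.
End F.
Section G.
Variable R : realType.
Notation mu2 := ((@lebesgue_measure R) \x (@lebesgue_measure R))%E.

Lemma collin (p1 p2 p3 : R * R) al be ga : (al != 0) || (be != 0) ->
  al * p1.1 + be * p1.2 + ga = 0 -> al * p2.1 + be * p2.2 + ga = 0 ->
  al * p3.1 + be * p3.2 + ga = 0 -> cross p1 p2 p3 = 0.
Proof.
case: p1 p2 p3 => [x1 y1] [x2 y2] [x3 y3] /= hab h1 h2 h3; rewrite /cross /=.
have e1 : al * cross (x1, y1) (x2, y2) (x3, y3) = 0.
  rewrite /cross /=.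
  have -> : al * ((x2 - x1) * (y3 - y1) - (y2 - y1) * (x3 - x1)) =
     (al * x2 - al * x1) * (y3 - y1) - (al * x3 - al * x1) * (y2 - y1) by ring.
  have -> : al * x2 - al * x1 = - be * (y2 - y1) by lra.
  have -> : al * x3 - al * x1 = - be * (y3 - y1) by lra.
  ring.
have e2 : be * cross (x1, y1) (x2, y2) (x3, y3) = 0.
  rewrite /cross /=.
  have -> : be * ((x2 - x1) * (y3 - y1) - (y2 - y1) * (x3 - x1)) =
     (x2 - x1) * (be * y3 - be * y1) - (x3 - x1) * (be * y2 - be * y1) by ring.
  have -> : be * y2 - be * y1 = - al * (x2 - x1) by lra.
  have -> : be * y3 - be * y1 = - al * (x3 - x1) by lra.
  ring.
move: hab => /orP[] h.
  by move: e1 => /eqP; rewrite mulf_eq0 (negbTE h) /= => /eqP.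
by move: e2 => /eqP; rewrite mulf_eq0 (negbTE h) /= => /eqP.
Qed.

Lemma sep (p1 p2 p3 q1 q2 q3 : R * R) (S1 S2 : set (R * R)) al be ga :
  (al != 0) || (be != 0) ->
  al * p1.1 + be * p1.2 + ga <= 0 -> al * p2.1 + be * p2.2 + ga <= 0 ->
  al * p3.1 + be * p3.2 + ga <= 0 ->
  0 <= al * q1.1 + be * q1.2 + ga -> 0 <= al * q2.1 + be * q2.2 + ga ->
  0 <= al * q3.1 + be * q3.2 + ga ->
  S1 `<=` otri p1 p2 p3 -> (cross p1 p2 p3 = 0 -> S1 = set0) ->
  S2 `<=` otri q1 q2 q3 -> (cross q1 q2 q3 = 0 -> S2 = set0) ->
  S1 `&` S2 = set0.
Proof.
move=> hab hp1 hp2 hp3 hq1 hq2 hq3 sS1 e1 sS2 e2.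
apply/seteqP; split => // X [X1 X2].
have [a [b [c [ha [hb [hc [hs EX]]]]]]] := sS1 X X1.
have [a' [b' [c' [ha' [hb' [hc' [hs' EX']]]]]]] := sS2 X X2.
have h1 : al * X.1 + be * X.2 + ga =
  a * (al * p1.1 + be * p1.2 + ga) + b * (al * p2.1 + be * p2.2 + ga) +
  c * (al * p3.1 + be * p3.2 + ga).
  rewrite EX /=; transitivity (al * (a * p1.1 + b * p2.1 + c * p3.1) +
     be * (a * p1.2 + b * p2.2 + c * p3.2) + (a + b + c) * ga); first by rewrite hs mul1r.
  ring.
have h2 : al * X.1 + be * X.2 + ga =
  a' * (al * q1.1 + be * q1.2 + ga) + b' * (al * q2.1 + be * q2.2 + ga) +
  c' * (al * q3.1 + be * q3.2 + ga).
  rewrite EX' /=; transitivity (al * (a' * q1.1 + b' * q2.1 + c' * q3.1) +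
     be * (a' * q1.2 + b' * q2.2 + c' * q3.2) + (a' + b' + c') * ga); first by rewrite hs' mul1r.
  ring.
have z1 : 0 <= al * X.1 + be * X.2 + ga.
  rewrite h2; apply: addr_ge0; [apply: addr_ge0|]; apply: mulr_ge0 => //; exact: ltW.
move: z1; rewrite h1.
set f1 := al * p1.1 + be * p1.2 + ga.
set f2 := al * p2.1 + be * p2.2 + ga.
set f3 := al * p3.1 + be * p3.2 + ga.
move=> z1.
have t1 : a * f1 <= 0 by apply: mulr_ge0_le0 => //; exact: ltW.
have t2 : b * f2 <= 0 by apply: mulr_ge0_le0 => //; exact: ltW.
have t3 : c * f3 <= 0 by apply: mulr_ge0_le0 => //; exact: ltW.
have k1 : a * f1 = 0 by lra.
have k2 : b * f2 = 0 by lra.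
have k3 : c * f3 = 0 by lra.
have e : cross p1 p2 p3 = 0.
  apply: (collin (ga:=ga) hab).
  by move: k1 => /eqP; rewrite mulf_eq0 (gt_eqF ha) /= => /eqP.
  by move: k2 => /eqP; rewrite mulf_eq0 (gt_eqF hb) /= => /eqP.
  by move: k3 => /eqP; rewrite mulf_eq0 (gt_eqF hc) /= => /eqP.
by move: X1; rewrite (e1 e).
Qed.
Lemma leb_mono (A B : set R) : A `<=` B -> (lebesgue_measure A <= lebesgue_measure B)%E.
Proof.
rewrite /lebesgue_measure /lebesgue_stieltjes_measure /measure_extension.
move=> AB. by apply: le_outer_measure.
Qed.
Lemma le_int_any (f g : R -> \bar R) : (forall x, 0 <= f x)%E -> (forall x, f x <= g x)%E ->
  (\int[@lebesgue_measure R]_x f x <= \int[@lebesgue_measure R]_x g x)%E.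
Proof.
move=> f0 fg.
have g0 : forall x, (0 <= g x)%E by move=> x; exact: le_trans (f0 x) (fg x).
rewrite !ge0_integralTE //.
apply: ereal_sup_le => _ [h hf <-]; exists h => //= x.
exact: le_trans (hf x) (fg x).
Qed.

Lemma mu2_mono (A B : set (R * R)) : A `<=` B -> (mu2 A <= mu2 B)%E.
Proof.
move=> AB; rewrite /product_measure1; apply: le_int_any => x.
  exact: measure_ge0.
apply: leb_mono => y; rewrite /xsection /= !inE; exact: AB.
Qed.

Lemma sum_ind (f : 'I_8 -> R) (i : 'I_8) : \sum_(l < 8) (l == i)%:R * f l = f i.
Proof.
rewrite (bigD1 i) //= eqxx mul1r big1 ?addr0 // => l /negbTE ->; by rewrite mul0r.
Qed.

Lemma hull_tri (K : 'I_8 -> R * R) (i j k : 'I_8) : otri (K i) (K j) (K k) `<=` convex_hull K.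
Proof.
move=> X [a [b [c [ha [hb [hc [hs ->]]]]]]].
exists (fun l => a * (l == i)%:R + b * (l == j)%:R + c * (l == k)%:R).
split.
  move=> l; apply: addr_ge0; [apply: addr_ge0|]; apply: mulr_ge0 => //; exact: ltW.
split.
  rewrite !big_split /= -!mulr_sumr.
  have e l0 : \sum_(l < 8) (l == l0)%:R = 1 :> R.
    rewrite (eq_bigr (fun l => (l == l0)%:R * 1)); last by move=> l _; rewrite mulr1.
    exact: (sum_ind (fun _ => 1)).
  by rewrite !e !mulr1.
congr pair.
  rewrite (eq_bigr (fun l => a * ((l == i)%:R * (K l).1) + b * ((l == j)%:R * (K l).1) + c * ((l == k)%:R * (K l).1))); last by move=> l _; ring.
  by rewrite !big_split /= -!mulr_sumr !sum_ind.
rewrite (eq_bigr (fun l => a * ((l == i)%:R * (K l).2) + b * ((l == j)%:R * (K l).2) + c * ((l == k)%:R * (K l).2))); last by move=> l _; ring.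
by rewrite !big_split /= -!mulr_sumr !sum_ind.
Qed.

Lemma ex_min (f : 'I_8 -> R) : exists i, forall j, f i <= f j.
Proof.
case: (@arg_minP _ _ _ ord0 xpredT f isT) => i _ H; exists i => j; exact: H.
Qed.
Lemma ex_max (f : 'I_8 -> R) : exists i, forall j, f j <= f i.
Proof.
case: (@arg_maxP _ _ _ ord0 xpredT f isT) => i _ H; exists i => j; exact: H.
Qed.
End G.


End Aux.
Import Aux.
Unset Implicit Arguments.

Theorem mainTheorem4 (R : realType) (A B C D E F P Q : pt R) :
  rectangle A B C D ->
  height B C E F > dist A B ->
  height A B P Q > dist B C ->
  ((2^-1 * (height B C E F - dist A B) * dist B C
    + 2^-1 * (height A B P Q - dist B C) * dist A B
    + dist A B * dist B C)%:E <= mu (pts8 A B C D E F P Q))%E.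
Proof.
move=> [hAB [hBC [horth hD]]] _ _.
set K := pts8 A B C D E F P Q.
pose u1 := B.1 - A.1. pose u2 := B.2 - A.2. pose v1 := C.1 - B.1. pose v2 := C.2 - B.2.
have uv0 : u1 * v1 + u2 * v2 = 0 by [].
pose ua := u1 ^+ 2 + u2 ^+ 2. pose vb := v1 ^+ 2 + v2 ^+ 2.
have peq : forall X Y : pt R, Y.1 - X.1 = 0 -> Y.2 - X.2 = 0 -> X = Y.
  by move=> [x1 x2] [y1 y2] /= h1 h2; congr pair; lra.
have ua0 : 0 < ua.
  rewrite lt_neqAle; apply/andP; split; last by rewrite /ua; nra.
  apply/eqP => e; apply: hAB.
  have e1 : u1 = 0 by rewrite /ua in e; nra.
  have e2 : u2 = 0 by rewrite /ua in e; nra.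
  exact: peq.
have vb0 : 0 < vb.
  rewrite lt_neqAle; apply/andP; split; last by rewrite /vb; nra.
  apply/eqP => e; apply: hBC.
  have e1 : v1 = 0 by rewrite /vb in e; nra.
  have e2 : v2 = 0 by rewrite /vb in e; nra.
  exact: peq.
pose sig := u1 * v2 - u2 * v1.
have sig2 : sig ^+ 2 = ua * vb.
  transitivity (ua * vb - (u1 * v1 + u2 * v2) ^+ 2); last by rewrite uv0 expr0n /= subr0.
  rewrite /sig /ua /vb; ring.
have dAB : dist A B = Num.sqrt ua by rewrite /dist /ua /u1 /u2; congr Num.sqrt; ring.
have dBC : dist B C = Num.sqrt vb by rewrite /dist /vb /v1 /v2; congr Num.sqrt; ring.
pose cEF := v1 * (F.2 - E.2) - v2 * (F.1 - E.1).
pose cPQ := u1 * (Q.2 - P.2) - u2 * (Q.1 - P.1).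
have hE : height B C E F = `|cEF| / Num.sqrt vb by rewrite /height dBC.
have hP : height A B P Q = `|cPQ| / Num.sqrt ua by rewrite /height dAB.
have ra0 : 0 < Num.sqrt ua by rewrite sqrtr_gt0.
have rb0 : 0 < Num.sqrt vb by rewrite sqrtr_gt0.
rewrite hE hP dAB dBC.
have -> : 2^-1 * (`|cEF| / Num.sqrt vb - Num.sqrt ua) * Num.sqrt vb +
  2^-1 * (`|cPQ| / Num.sqrt ua - Num.sqrt vb) * Num.sqrt ua + Num.sqrt ua * Num.sqrt vb
  = (`|cEF| + `|cPQ|) / 2.
  field; apply/andP; split; exact: lt0r_neq0.
pose sc (X : pt R) := (X.1 - A.1) * u1 + (X.2 - A.2) * u2.
pose tc (X : pt R) := (X.1 - A.1) * v1 + (X.2 - A.2) * v2.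
have [iL HL] := ex_min (fun i => sc (K i)).
have [iR HR] := ex_max (fun i => sc (K i)).
have [iT HT] := ex_max (fun i => tc (K i)).
have [iB HB] := ex_min (fun i => tc (K i)).
set L := K iL in HL *. set Rt := K iR in HR *. set T := K iT in HT *. set Bo := K iB in HB *.
pose o0 := @Ordinal 8 0 isT. pose o1 := @Ordinal 8 1 isT. pose o2 := @Ordinal 8 2 isT.
pose o3 := @Ordinal 8 3 isT. pose o4 := @Ordinal 8 4 isT. pose o5 := @Ordinal 8 5 isT.
pose o6 := @Ordinal 8 6 isT. pose o7 := @Ordinal 8 7 isT.
have sLA : sc L <= sc A := HL o0.
have sLE : sc L <= sc E := HL o4.
have sLF : sc L <= sc F := HL o5.
have sLT : sc L <= sc T := HL iT.
have sLB : sc L <= sc Bo := HL iB.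
have sRB : sc B <= sc Rt := HR o1.
have sRE : sc E <= sc Rt := HR o4.
have sRF : sc F <= sc Rt := HR o5.
have sRT : sc T <= sc Rt := HR iT.
have sRBo : sc Bo <= sc Rt := HR iB.
have tTC : tc C <= tc T := HT o2.
have tTP : tc P <= tc T := HT o6.
have tTQ : tc Q <= tc T := HT o7.
have tTL : tc L <= tc T := HT iL.
have tTR : tc Rt <= tc T := HT iR.
have tBA : tc Bo <= tc A := HB o0.
have tBP : tc Bo <= tc P := HB o6.
have tBQ : tc Bo <= tc Q := HB o7.
have tBL : tc Bo <= tc L := HB iL.
have tBR : tc Bo <= tc Rt := HB iR.
have sA : sc A = 0 by rewrite /sc !subrr !mul0r addr0.
have tA : tc A = 0 by rewrite /tc !subrr !mul0r addr0.
have sB : sc B = ua by rewrite /sc /ua -/u1 -/u2; ring.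
have tB : tc B = 0 by rewrite /tc -/u1 -/u2 -uv0; ring.
have sC : sc C = ua.
  have e : sc C - ua = u1 * v1 + u2 * v2 by rewrite /sc /ua /u1 /u2 /v1 /v2; ring.
  by move: e; rewrite uv0 => /eqP; rewrite subr_eq0 => /eqP.
have tC : tc C = vb.
  have e : tc C - vb = u1 * v1 + u2 * v2 by rewrite /tc /vb /u1 /u2 /v1 /v2; ring.
  by move: e; rewrite uv0 => /eqP; rewrite subr_eq0 => /eqP.
have sD : sc D = 0.
  have e : sc D = u1 * v1 + u2 * v2 by rewrite hD /sc /u1 /u2 /v1 /v2 /=; ring.
  by rewrite e uv0.
have tD : tc D = vb by rewrite hD /tc /= /vb /v1 /v2; ring.
pose crossV (X Y : pt R) := v1 * (Y.2 - X.2) - v2 * (Y.1 - X.1).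
pose crossU (X Y : pt R) := u1 * (Y.2 - X.2) - u2 * (Y.1 - X.1).
have idV X Y : crossV X Y * ua = - sig * (sc Y - sc X).
  have e : crossV X Y * ua + sig * (sc Y - sc X) = (u1 * v1 + u2 * v2) * crossU X Y.
    by rewrite /crossV /crossU /ua /sig /sc; ring.
  move: e; rewrite uv0 mul0r => e; lra.
have idU X Y : crossU X Y * vb = sig * (tc Y - tc X).
  have e : crossU X Y * vb - sig * (tc Y - tc X) = (u1 * v1 + u2 * v2) * crossV X Y.
    by rewrite /crossV /crossU /vb /sig /tc; ring.
  move: e; rewrite uv0 mul0r => e; lra.
pose k1 := `|sig| / ua. pose k2 := `|sig| / vb.
have k10 : 0 <= k1 by rewrite /k1 divr_ge0 // ltW.
have k20 : 0 <= k2 by rewrite /k2 divr_ge0 // ltW.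
have nV X Y : `|crossV X Y| = k1 * `|sc Y - sc X|.
  have -> : crossV X Y = (- sig * (sc Y - sc X)) / ua.
    by rewrite -idV mulfK // lt0r_neq0.
  by rewrite /k1 !normrM normfV normrN (gtr0_norm ua0) mulrAC.
have nU X Y : `|crossU X Y| = k2 * `|tc Y - tc X|.
  have -> : crossU X Y = (sig * (tc Y - tc X)) / vb.
    by rewrite -idU mulfK // lt0r_neq0.
  by rewrite /k2 !normrM normfV (gtr0_norm vb0) mulrAC.
have sk1 : `|sig| = k1 * ua by rewrite /k1 mulfVK // lt0r_neq0.
have sk2 : `|sig| = k2 * vb by rewrite /k2 mulfVK // lt0r_neq0.
have c1 : cross A B C = sig by rewrite /cross /sig /u1 /u2 /v1 /v2; ring.
have c2 : cross A C D = sig by rewrite /cross hD /sig /u1 /u2 /v1 /v2 /=; ring.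
have c3 : cross L A D = crossV A L by rewrite /cross hD /crossV /v1 /v2 /=; ring.
have c4 : cross Rt B C = crossV B Rt by rewrite /cross /crossV /v1 /v2; ring.
have c5 : cross T D C = crossU D T by rewrite /cross hD /crossU /u1 /u2 /=; ring.
have c6 : cross Bo A B = crossU A Bo by rewrite /cross /crossU /u1 /u2; ring.
have hx : `|crossV E F| <= `|sig| + `|cross L A D| + `|cross Rt B C|.
  rewrite c3 c4 !nV sA sB sk1 subr0 (ler0_norm (le_trans sLA _)); last by rewrite sA.
  rewrite (ger0_norm (_ : 0 <= sc Rt - ua)); last by rewrite subr_ge0 -sB.
  rewrite -!mulrDr ler_wpM2l //; rewrite ler_norml; apply/andP; split; lra.
have hy : `|crossU P Q| <= `|sig| + `|cross T D C| + `|cross Bo A B|.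
  rewrite sk2 c5 c6 !nU tA tD subr0 (ler0_norm (le_trans tBA _)); last by rewrite tA.
  rewrite (ger0_norm (_ : 0 <= tc T - vb)); last by rewrite subr_ge0 -tC.
  rewrite -!mulrDr ler_wpM2l //; rewrite ler_norml; apply/andP; split; lra.
have sepST : forall (al be ga : R) (p1 p2 p3 q1 q2 q3 : pt R) (S S' : set (pt R)),
  (al != 0) || (be != 0) ->
  al * sc p1 + be * tc p1 + ga <= 0 -> al * sc p2 + be * tc p2 + ga <= 0 ->
  al * sc p3 + be * tc p3 + ga <= 0 ->
  0 <= al * sc q1 + be * tc q1 + ga -> 0 <= al * sc q2 + be * tc q2 + ga ->
  0 <= al * sc q3 + be * tc q3 + ga ->
  (S `<=` otri p1 p2 p3)%classic -> (cross p1 p2 p3 = 0 -> S = set0) ->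
  (S' `<=` otri q1 q2 q3)%classic -> (cross q1 q2 q3 = 0 -> S' = set0) -> (S `&` S' = set0)%classic.
  move=> al be ga p1 p2 p3 q1 q2 q3 S S' hab.
  have conv X : (al * u1 + be * v1) * X.1 + (al * u2 + be * v2) * X.2 +
     (ga - al * (A.1 * u1 + A.2 * u2) - be * (A.1 * v1 + A.2 * v2)) = al * sc X + be * tc X + ga.
    by rewrite /sc /tc; ring.
  rewrite -!conv; apply: sep.
  have [e1|e1] := eqVneq (al * u1 + be * v1) 0; last by apply/orP; left.
  have [e2|e2] := eqVneq (al * u2 + be * v2) 0; last by apply/orP; right.
  exfalso.
  have ea : al * ua = 0.
    transitivity (u1 * (al * u1 + be * v1) + u2 * (al * u2 + be * v2) - be * (u1 * v1 + u2 * v2)).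
      by rewrite /ua; ring.
    by rewrite e1 e2 uv0; ring.
  have eb : be * vb = 0.
    transitivity (v1 * (al * u1 + be * v1) + v2 * (al * u2 + be * v2) - al * (u1 * v1 + u2 * v2)).
      by rewrite /vb; ring.
    by rewrite e1 e2 uv0; ring.
  have al0 : al = 0 by move: ea => /eqP; rewrite mulf_eq0 (gt_eqF ua0) orbF => /eqP.
  have be0 : be = 0 by move: eb => /eqP; rewrite mulf_eq0 (gt_eqF vb0) orbF => /eqP.
  by move: hab; rewrite al0 be0 eqxx.
have [S1 [m1 [s1 [z1 l1]]]] := TPall A B C.
have [S2 [m2 [s2 [z2 l2]]]] := TPall A C D.
have [S3 [m3 [s3 [z3 l3]]]] := TPall L A D.
have [S4 [m4 [s4 [z4 l4]]]] := TPall Rt B C.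
have [S5 [m5 [s5 [z5 l5]]]] := TPall T D C.
have [S6 [m6 [s6 [z6 l6]]]] := TPall Bo A B.
have nz1 : ((1:R) != 0) || ((0:R) != 0) by rewrite oner_eq0.
have nzm1 : ((-1:R) != 0) || ((0:R) != 0) by rewrite oppr_eq0 oner_eq0.
have nz01 : ((0:R) != 0) || ((1:R) != 0) by rewrite eqxx oner_eq0.
have nz0m1 : ((0:R) != 0) || ((-1:R) != 0) by rewrite eqxx oppr_eq0 oner_eq0.
have nzd : (- vb != 0) || (ua != 0) by rewrite oppr_eq0 (gt_eqF vb0).
have d12 : (S1 `&` S2 = set0)%classic.
  by apply: (sepST (- vb) ua 0 A B C A C D S1 S2 nzd _ _ _ _ _ _ s1 z1 s2 z2);
    rewrite ?sA ?tA ?sB ?tB ?sC ?tC ?sD ?tD; clear - ua0 vb0; nra.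
have d13 : (S1 `&` S3 = set0)%classic.
  by apply: (sepST (-1) 0 0 A B C L A D S1 S3 nzm1 _ _ _ _ _ _ s1 z1 s3 z3);
    rewrite ?sA ?tA ?sB ?tB ?sC ?tC ?sD ?tD; clear - ua0 vb0 sLA sA; lra.
have d14 : (S1 `&` S4 = set0)%classic.
  by apply: (sepST (1) (0) (-ua) A B C Rt B C S1 S4 nz1 _ _ _ _ _ _ s1 z1 s4 z4);
    rewrite ?sA ?tA ?sB ?tB ?sC ?tC ?sD ?tD; clear - ua0 vb0 sRB sB; lra.
have d23 : (S2 `&` S3 = set0)%classic.
  by apply: (sepST (-1) (0) (0) A C D L A D S2 S3 nzm1 _ _ _ _ _ _ s2 z2 s3 z3);
    rewrite ?sA ?tA ?sB ?tB ?sC ?tC ?sD ?tD; clear - ua0 vb0 sLA sA; lra.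
have d24 : (S2 `&` S4 = set0)%classic.
  by apply: (sepST (1) (0) (-ua) A C D Rt B C S2 S4 nz1 _ _ _ _ _ _ s2 z2 s4 z4);
    rewrite ?sA ?tA ?sB ?tB ?sC ?tC ?sD ?tD; clear - ua0 vb0 sRB sB; lra.
have d34 : (S3 `&` S4 = set0)%classic.
  by apply: (sepST (1) (0) (0) L A D Rt B C S3 S4 nz1 _ _ _ _ _ _ s3 z3 s4 z4);
    rewrite ?sA ?tA ?sB ?tB ?sC ?tC ?sD ?tD; clear - ua0 vb0 sRB sB sLA sA; lra.
have d15 : (S1 `&` S5 = set0)%classic.
  by apply: (sepST (0) (1) (-vb) A B C T D C S1 S5 nz01 _ _ _ _ _ _ s1 z1 s5 z5);
    rewrite ?sA ?tA ?sB ?tB ?sC ?tC ?sD ?tD; clear - ua0 vb0 tTC tC; lra.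
have d25 : (S2 `&` S5 = set0)%classic.
  by apply: (sepST (0) (1) (-vb) A C D T D C S2 S5 nz01 _ _ _ _ _ _ s2 z2 s5 z5);
    rewrite ?sA ?tA ?sB ?tB ?sC ?tC ?sD ?tD; clear - ua0 vb0 tTC tC; lra.
have d16 : (S1 `&` S6 = set0)%classic.
  by apply: (sepST (0) (-1) (0) A B C Bo A B S1 S6 nz0m1 _ _ _ _ _ _ s1 z1 s6 z6);
    rewrite ?sA ?tA ?sB ?tB ?sC ?tC ?sD ?tD; clear - ua0 vb0 tBA tA; lra.
have d26 : (S2 `&` S6 = set0)%classic.
  by apply: (sepST (0) (-1) (0) A C D Bo A B S2 S6 nz0m1 _ _ _ _ _ _ s2 z2 s6 z6);
    rewrite ?sA ?tA ?sB ?tB ?sC ?tC ?sD ?tD; clear - ua0 vb0 tBA tA; lra.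
have d56 : (S5 `&` S6 = set0)%classic.
  by apply: (sepST (0) (-1) (0) T D C Bo A B S5 S6 nz0m1 _ _ _ _ _ _ s5 z5 s6 z6);
    rewrite ?sA ?tA ?sB ?tB ?sC ?tC ?sD ?tD; clear - ua0 vb0 tBA tA tTC tC; lra.
have d35 : (S3 `&` S5 = set0)%classic.
  have [h|h] := leP (tc L) vb.
    by apply: (sepST 0 1 (-vb) L A D T D C S3 S5 nz01 _ _ _ _ _ _ s3 z3 s5 z5);
      rewrite ?sA ?tA ?sB ?tB ?sC ?tC ?sD ?tD; clear - ua0 vb0 tTC tC h; lra.
  have nz : (tc L - vb != 0) || (- sc L != 0) by rewrite subr_eq0 gt_eqF.
  by apply: (sepST (tc L - vb) (- sc L) (sc L * vb) L A D T D C S3 S5 nz _ _ _ _ _ _ s3 z3 s5 z5);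
    rewrite ?sA ?tA ?sB ?tB ?sC ?tC ?sD ?tD; clear - ua0 vb0 sLA sA sLT tTL h; nra.
have d45 : (S4 `&` S5 = set0)%classic.
  have [h|h] := leP (tc Rt) vb.
    by apply: (sepST 0 1 (-vb) Rt B C T D C S4 S5 nz01 _ _ _ _ _ _ s4 z4 s5 z5);
      rewrite ?sA ?tA ?sB ?tB ?sC ?tC ?sD ?tD; clear - ua0 vb0 tTC tC h; lra.
  have nz : (vb - tc Rt != 0) || (sc Rt - ua != 0) by rewrite subr_eq0 lt_eqF.
  by apply: (sepST (vb - tc Rt) (sc Rt - ua) (-(sc Rt - ua) * tc Rt - (vb - tc Rt) * sc Rt) Rt B C T D C S4 S5 nz _ _ _ _ _ _ s4 z4 s5 z5);
    rewrite ?sA ?tA ?sB ?tB ?sC ?tC ?sD ?tD; clear - ua0 vb0 sRB sB sRT tTR h; nra.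
have d36 : (S3 `&` S6 = set0)%classic.
  have [h|h] := leP 0 (tc L).
    by apply: (sepST 0 (-1) 0 L A D Bo A B S3 S6 nz0m1 _ _ _ _ _ _ s3 z3 s6 z6);
      rewrite ?sA ?tA ?sB ?tB ?sC ?tC ?sD ?tD; clear - ua0 vb0 tBA tA h; lra.
  have nz : (- tc L != 0) || (sc L != 0) by rewrite oppr_eq0 lt_eqF.
  by apply: (sepST (- tc L) (sc L) 0 L A D Bo A B S3 S6 nz _ _ _ _ _ _ s3 z3 s6 z6);
    rewrite ?sA ?tA ?sB ?tB ?sC ?tC ?sD ?tD; clear - ua0 vb0 sLA sA sLB tBL h; nra.
have d46 : (S4 `&` S6 = set0)%classic.
  have [h|h] := leP 0 (tc Rt).
    by apply: (sepST 0 (-1) 0 Rt B C Bo A B S4 S6 nz0m1 _ _ _ _ _ _ s4 z4 s6 z6);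
      rewrite ?sA ?tA ?sB ?tB ?sC ?tC ?sD ?tD; clear - ua0 vb0 tBA tA h; lra.
  have nz : (tc Rt != 0) || (ua - sc Rt != 0) by rewrite lt_eqF.
  by apply: (sepST (tc Rt) (ua - sc Rt) (-(ua - sc Rt) * tc Rt - tc Rt * sc Rt) Rt B C Bo A B S4 S6 nz _ _ _ _ _ _ s4 z4 s6 z6);
    rewrite ?sA ?tA ?sB ?tB ?sC ?tC ?sD ?tD; clear - ua0 vb0 sRB sB sRBo tBR h; nra.
have hull : (S1 `|` S2 `|` S3 `|` S4 `|` S5 `|` S6 `<=` convex_hull K)%classic.
  move=> X [[[[[h|h]|h]|h]|h]|h].
  exact: (@hull_tri R K o0 o1 o2 X (s1 X h)).
  exact: (@hull_tri R K o0 o2 o3 X (s2 X h)).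
  exact: (@hull_tri R K iL o0 o3 X (s3 X h)).
  exact: (@hull_tri R K iR o1 o2 X (s4 X h)).
  exact: (@hull_tri R K iT o3 o2 X (s5 X h)).
  exact: (@hull_tri R K iB o0 o1 X (s6 X h)).
rewrite /mu; apply: le_trans (mu2_mono hull).
have mU2 : measurable (S1 `|` S2)%classic by apply: measurableU.
have mU3 : measurable (S1 `|` S2 `|` S3)%classic by apply: measurableU.
have mU4 : measurable (S1 `|` S2 `|` S3 `|` S4)%classic by apply: measurableU.
have mU5 : measurable (S1 `|` S2 `|` S3 `|` S4 `|` S5)%classic by apply: measurableU.
have e3 : ((S1 `|` S2) `&` S3 = set0)%classic by rewrite setIUl d13 d23 setU0.
have e4 : ((S1 `|` S2 `|` S3) `&` S4 = set0)%classic by rewrite !setIUl d14 d24 d34 !setU0.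
have e5 : ((S1 `|` S2 `|` S3 `|` S4) `&` S5 = set0)%classic by rewrite !setIUl d15 d25 d35 d45 !setU0.
have e6 : ((S1 `|` S2 `|` S3 `|` S4 `|` S5) `&` S6 = set0)%classic by rewrite !setIUl d16 d26 d36 d46 d56 !setU0.
rewrite measureU //.
rewrite measureU //.
rewrite measureU //.
rewrite measureU //.
rewrite measureU //.
apply: le_trans (leeD (leeD (leeD (leeD (leeD l1 l2) l3) l4) l5) l6).
rewrite -!EFinD lee_fin c1 c2.
have hx' : `|cEF| <= `|sig| + `|cross L A D| + `|cross Rt B C| := hx.
have hy' : `|cPQ| <= `|sig| + `|cross T D C| + `|cross Bo A B| := hy.
clear - hx' hy'; lra.
Qed.
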